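(* For any compact domain $\mathcal{K}\subset\mathbb{R}^{d_x}$, if $N<\max(d_x+1,d_y)$ then $\mathcal{N}_N(\sigma_\alpha)$ is not dense in $C(\mathcal{K},\mathbb{R}^{d_y})$ with respect to the uniform norm on $\mathcal{K}$; i.e., leaky-ReLU networks of width $N$ do not have the universal approximation property for $C(\mathcal{K},\mathbb{R}^{d_y})$.
   Context: Fix $\alpha\in\mathbb{R}^+\setminus\{1\}$ and let $\sigma_\alpha(x)=x$ for $x>0$ and $\sigma_\alpha(x)=\alpha x$ for $x\le 0$, applied coordinatewise (leaky-ReLU). A leaky-ReLU network of width $N$ and depth $L$ from $\mathbb{R}^{d_x}$ to $\mathbb{R}^{d_y}$ is a map $x\mapsto W_{L+1}\sigma_\alpha(W_L(\cdots\sigma_\alpha(W_1x+b_1)\cdots)+b_L)+b_{L+1}$ with $W_1\in\mathbb{R}^{N\times d_x}$, $W_i\in\mathbb{R}^{N\times N}$ for $2\le i\le L$, $b_i\in\mathbb{R}^N$ for $1\le i\le L$, $W_{L+1}\in\mathbb{R}^{d_y\times N}$, $b_{L+1}\in\mathbb{R}^{d_y}$. $\mathcal{N}_N(\sigma_\alpha)$ denotes the set of all such networks of width $N$ over all depths $L$. *)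

(* Defs.v *)
From HB Require Import structures.
From mathcomp Require Import all_boot all_order all_algebra.
From mathcomp Require Import all_classical all_reals all_analysis.
Set Implicit Arguments. Unset Strict Implicit. Unset Printing Implicit Defensive.
Import Order.TTheory GRing.Theory Num.Theory.
Import numFieldNormedType.Exports.
Local Open Scope ring_scope.
Local Open Scope classical_set_scope.

Definition leaky {R : realType} (alpha x : R) : R := if 0 < x then x else alpha * x.

Definition act {R : realType} (alpha : R) {N : nat} (v : 'cV[R]_N) : 'cV[R]_N :=
  map_mx (leaky alpha) v.

(* A leaky-ReLU network of width N and depth L = 1 + size hs:
   x |-> Wo * sigma(W_L( ... sigma(W1 x + b1) ...) + b_L) + bo,
   where hs lists the hidden layers (W_i, b_i), 2 <= i <= L. *)
Definition nn_eval {R : realType} (alpha : R) {dx dy N : nat}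
  (W1 : 'M[R]_(N, dx)) (b1 : 'cV[R]_N) (hs : seq ('M[R]_N * 'cV[R]_N))
  (Wo : 'M[R]_(dy, N)) (bo : 'cV[R]_dy) (x : 'cV[R]_dx) : 'cV[R]_dy :=
  Wo *m foldl (fun h p => act alpha (p.1 *m h + p.2)) (act alpha (W1 *m x + b1)) hs + bo.

Definition leaky_net {R : realType} (alpha : R) (dx dy N : nat)
  (f : 'cV[R]_dx -> 'cV[R]_dy) : Prop :=
  exists (W1 : 'M[R]_(N, dx)) (b1 : 'cV[R]_N) (hs : seq ('M[R]_N * 'cV[R]_N))
         (Wo : 'M[R]_(dy, N)) (bo : 'cV[R]_dy),
    forall x, f x = nn_eval alpha W1 b1 hs Wo bo x.

(* N_N(sigma_alpha) is dense in C(K, R^dy) w.r.t. the uniform norm on K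
   (the entrywise max norm on R^dy is used; all norms are equivalent). *)
Definition leaky_UAP {R : realType} (alpha : R) (dx dy N : nat)
  (K : set 'cV[R]_dx) : Prop :=
  forall g : 'cV[R]_dx -> 'cV[R]_dy, {within K, continuous g} ->
  forall eps : R, 0 < eps ->
  exists f, @leaky_net R alpha dx dy N f /\ forall x, K x -> `|f x - g x| < eps.

(* Main.v *)
Require Import Defs.
From HB Require Import structures.
From mathcomp Require Import all_boot all_order all_algebra.
From mathcomp Require Import all_classical all_reals all_analysis.
From mathcomp Require Import ring lra.
Import Order.TTheory GRing.Theory Num.Theory.
Import numFieldNormedType.Exports.
Local Open Scope ring_scope.
Local Open Scope classical_set_scope.
Section S.
Variable R : realType.
Lemma mx_entry_le m n (A : 'M[R]_(m,n)) i j : `|A i j| <= `|A|.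
Proof.
rewrite [leRHS]/Num.Def.normr /= mx_normrE.
by apply/bigmax_geP; right; exists (i,j).
Qed.
Lemma mx_le_entries m n (A : 'M[R]_(m,n)) e : 0 <= e -> (forall i j, `|A i j| <= e) -> `|A| <= e.
Proof.
move=> e0 H; rewrite [leLHS]/Num.Def.normr /= mx_normrE.
by apply: bigmax_le => // -[i j] _; apply: H.
Qed.
Lemma lip_cont (U V : normedModType R) (f : U -> V) (L : R) :
  (forall x y, `|f x - f y| <= L * `|x - y|) -> continuous f.
Proof.
move=> Hf x; apply/cvgrPdist_lt => e e0.
have L1 : 0 < Num.max L 1 by rewrite lt_max ltr01 orbT.
near=> t.
apply: (le_lt_trans (Hf x t)).
apply: (le_lt_trans (y := Num.max L 1 * `|x - t|)).
  by apply: ler_wpM2r => //; rewrite le_max lexx.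
rewrite -ltr_pdivlMl //.
near: t; apply: cvgr_dist_lt => //.
by rewrite mulr_gt0 ?invr_gt0.
Unshelve. all: by end_near. Qed.
Lemma ker_or_free m n (A : 'M[R]_(m,n)) :
  (exists v : 'cV[R]_n, v != 0 /\ A *m v = 0) \/ row_free A^T.
Proof.
case Hf: (row_free A^T); [by right|left].
have : kermx A^T != 0 by rewrite kermx_eq0 Hf.
case: (pickP (fun i => row i (kermx A^T) != 0)) => [i Hi _|H].
  exists (row i (kermx A^T))^T; split; first by rewrite trmx_eq0.
  by apply: trmx_inj; rewrite trmx_mul trmxK -row_mul mulmx_ker row0 !trmx0.
move/eqP; case; apply/row_matrixP => i; rewrite row0.
by move: (H i) => /negbFE/eqP.
Qed.
Lemma free_inj m n (A : 'M[R]_(m,n)) (v : 'cV[R]_n) : row_free A^T -> A *m v = 0 -> v = 0.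
Proof.
move=> Hf Hv; apply/eqP; rewrite -trmx_eq0 -(mulmx_free_eq0 _ Hf).
by rewrite -trmx_mul Hv trmx0.
Qed.
Lemma ker_of_lt m n (A : 'M[R]_(m,n)) : (m < n)%N -> exists v : 'cV[R]_n, v != 0 /\ A *m v = 0.
Proof.
move=> mn; case: (ker_or_free _ _ A) => // Hf; exfalso.
move: Hf; rewrite /row_free mxrank_tr => /eqP E.
by move: (rank_leq_row A); rewrite E leqNgt mn.
Qed.
Lemma mulmx_lip m n (A : 'M[R]_(m,n)) (v : 'cV[R]_n) : `|A *m v| <= `|A| * n%:R * `|v|.
Proof.
apply: mx_le_entries => [|i j]; first by rewrite !mulr_ge0.
rewrite mxE; apply: (le_trans (ler_norm_sum _ _ _)).
apply: (le_trans (y := \sum_(k < n) `|A| * `|v|)).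
  apply: ler_sum => k _; rewrite normrM; apply: ler_pM => //; apply: mx_entry_le.
rewrite sumr_const card_ord -mulr_natr; rewrite le_eqVlt; apply/orP; left; apply/eqP; ring.
Qed.
Lemma leaky_lip (a x y : R) : 0 < a -> `|leaky a x - leaky a y| <= Num.max 1 a * `|x - y|.
Proof.
move=> a0; set M := Num.max 1 a.
have M1 : 1 <= M by rewrite le_max lexx.
have Ma : a <= M by rewrite le_max lexx orbT.
rewrite /leaky; case: ifP => hx; case: ifP => hy.
- by rewrite -[X in X <= _]mul1r ler_wpM2r.
- move/negbT: hy; rewrite -leNgt => hy.
  have h1 : 0 <= x - a * y by nra.
  rewrite (ger0_norm h1) ger0_norm; last by lra.
  nra.
- move/negbT: hx; rewrite -leNgt => hx.
  have h1 : a * x - y <= 0 by nra.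
  rewrite (ler0_norm h1) ler0_norm; last by lra.
  nra.
- by rewrite -mulrBr normrM gtr0_norm // ler_wpM2r.
Qed.
Lemma act_lip (a : R) n (u w : 'cV[R]_n) : 0 < a -> `|act a u - act a w| <= Num.max 1 a * `|u - w|.
Proof.
move=> a0; apply: mx_le_entries => [|i j].
  by rewrite mulr_ge0 // le_max ler01.
rewrite !mxE; apply: (le_trans (leaky_lip _ _ _ a0)).
by rewrite ler_wpM2l ?le_max ?ler01 //; have := mx_entry_le _ _ (u - w) i j; rewrite !mxE.
Qed.
Lemma leakyK (a x : R) : 0 < a -> leaky a^-1 (leaky a x) = x.
Proof.
move=> a0; rewrite /leaky; have [hx|hx] := ltP 0 x; first by rewrite hx.
have -> : (0 < a * x) = false by apply/negbTE; rewrite -leNgt; nra.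
by rewrite mulrA mulVf ?mul1r // gt_eqF.
Qed.
Lemma actK (a : R) n (u : 'cV[R]_n) : 0 < a -> act a^-1 (act a u) = u.
Proof. by move=> a0; apply/matrixP => i j; rewrite !mxE leakyK. Qed.
Definition lipf {U V : normedModType R} (G : U -> V) :=
  exists L, 0 < L /\ forall x y, `|G x - G y| <= L * `|x - y|.
Lemma lipf_cont {U V : normedModType R} (G : U -> V) : lipf G -> continuous G.
Proof. by case=> L [_ HL]; apply: lip_cont HL. Qed.
Lemma lipf_comp {U V W : normedModType R} (G : U -> V) (H : V -> W) :
  lipf G -> lipf H -> lipf (fun x => H (G x)).
Proof.
case=> L1 [L10 H1] [L2 [L20 H2]]; exists (L2 * L1); split; first exact: mulr_gt0.
move=> x y; apply: (le_trans (H2 _ _)); rewrite -mulrA ler_wpM2l //; exact: ltW.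
Qed.
Lemma lipf_id {U : normedModType R} : lipf (fun x : U => x).
Proof. by exists 1; split => // x y; rewrite mul1r. Qed.
Lemma lipf_affine m n (W : 'M[R]_(m,n)) (b : 'cV[R]_m) : lipf (fun v => W *m v + b).
Proof.
exists (`|W| * n%:R + 1); split; first by rewrite ltr_wpDl // mulr_ge0.
move=> x y; rewrite opprD addrACA subrr addr0 -mulmxBr.
apply: (le_trans (mulmx_lip _ _ _ _)); rewrite ler_wpM2r // lerDl //.
Qed.
Lemma lipf_act (a : R) n : 0 < a -> lipf (@act R a n).
Proof.
move=> a0; exists (Num.max 1 a); split; first by rewrite lt_max ltr01.
by move=> x y; apply: act_lip.
Qed.
Definition good n (G : 'cV[R]_n -> 'cV[R]_n) :=
  lipf G /\ exists H, lipf H /\ (forall y, G (H y) = y) /\ (forall x, H (G x) = x).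
Arguments good {n}.
Lemma good_id n : good (fun x : 'cV[R]_n => x).
Proof. split; first exact: lipf_id. by exists (fun x => x); split => //; exact: lipf_id. Qed.
Lemma good_layer (a : R) n (W : 'M[R]_n) (b : 'cV[R]_n) G : 0 < a -> W \in unitmx -> good G ->
  good (fun x => act a (W *m G x + b)).
Proof.
move=> a0 Wu [GL [H [HL [GH HG]]]]; split.
  apply: (@lipf_comp _ _ _ G (fun y => act a (W *m y + b))) => //.
  exact: (lipf_comp _ _ (lipf_affine _ _ W b) (lipf_act _ _ a0)).
exists (fun y => H (invmx W *m (act a^-1 y - b))); split; last split.
- apply: (@lipf_comp _ _ _ (fun y => invmx W *m (act a^-1 y - b))) => //.
  have h1 : lipf (fun y : 'cV[R]_n => act a^-1 y + - b).
    apply: (@lipf_comp _ _ _ (act a^-1) (fun y => y + - b)).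
      by apply: lipf_act; rewrite invr_gt0.
    by have := lipf_affine _ _ 1%:M (- b); under eq_fun do rewrite mul1mx.
  have h2 := lipf_comp _ _ h1 (lipf_affine _ _ (invmx W) 0).
  by move: h2; under eq_fun do rewrite addr0.
- by move=> y; rewrite GH mulKVmx // subrK -[X in act X]invrK actK ?invr_gt0.
- by move=> x; rewrite actK // addrK mulKmx.
Qed.
Definition curveP m (T : Type) (Phi : 'cV[R]_m -> T) (x0 : 'cV[R]_m) :=
  exists c : R -> 'cV[R]_m, lipf c /\ c 0 = x0 /\ (forall t, Phi (c t) = Phi x0) /\
    (forall B, exists t, 0 <= t /\ B <= `|c t - x0|).
Arguments curveP {m T}.
Lemma curve_comp m (T T' : Type) (Phi : 'cV[R]_m -> T) (psi : T -> T') x0 :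
  curveP Phi x0 -> curveP (fun x => psi (Phi x)) x0.
Proof.
case=> c [cL [c0 [cP cB]]]; exists c; split => //; split => //; split => //.
by move=> t; rewrite cP.
Qed.
Lemma curve_ker n k (G : 'cV[R]_n -> 'cV[R]_n) (W : 'M[R]_(k, n)) (v x0 : 'cV[R]_n) :
  good G -> v != 0 -> W *m v = 0 -> curveP (fun x => W *m G x) x0.
Proof.
move=> [[L [L0 GL]] [H [[LH [LH0 HL]] [GH HG]]]] v0 Wv.
have nv : 0 < `|v| by rewrite normr_gt0.
exists (fun t => H (G x0 + t *: v)); split; last split; last split.
- exists (LH * (`|v| + 1)); split; first by rewrite mulr_gt0 // ltr_wpDl.
  move=> s t; apply: (le_trans (HL _ _)).
  rewrite opprD addrACA subrr add0r -scalerBl normrZ -mulrA.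
  apply: ler_wpM2l; first exact: ltW.
  by rewrite mulrC; apply: ler_wpM2r => //; rewrite lerDl.
- by rewrite scale0r addr0 HG.
- by move=> t; rewrite GH mulmxDr -scalemxAr Wv scaler0 addr0.
- move=> B; exists (Num.max 0 B * L / `|v|); split.
    by rewrite divr_ge0 // ?mulr_ge0 ?le_max ?lexx // ltW.
  have := GL (H (G x0 + (Num.max 0 B * L / `|v|) *: v)) x0.
  rewrite GH addrAC subrr add0r normrZ ger0_norm; last first.
    by rewrite divr_ge0 // ?mulr_ge0 ?le_max ?lexx // ltW.
  rewrite divfK ?gt_eqF // mulrC ler_pM2l // => h.
  by apply: le_trans h; rewrite le_max lexx orbT.
Qed.
Lemma fold_dich (a : R) n (hs : seq ('M[R]_n * 'cV[R]_n)) (G : 'cV[R]_n -> 'cV[R]_n) x0 :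
  0 < a -> good G ->
  curveP (fun x => foldl (fun h p => act a (p.1 *m h + p.2)) (G x) hs) x0 \/
  good (fun x => foldl (fun h p => act a (p.1 *m h + p.2)) (G x) hs).
Proof.
move=> a0; elim: hs G => [|p hs IH] G gG /=; first by right.
case: (ker_or_free _ _ p.1) => [[v [v0 Wv]]|Hf].
  left; exact: (@curve_comp _ _ _ _ (fun h => foldl (fun h p => act a (p.1 *m h + p.2)) (act a (h + p.2)) hs) x0
    (@curve_ker _ _ G p.1 v x0 gG v0 Wv)).
apply: IH; apply: good_layer => //.
by rewrite -unitmx_tr -row_free_unit.
Qed.
Lemma curve_ext m (T : Type) (Phi Phi' : 'cV[R]_m -> T) x0 :
  (forall x, Phi x = Phi' x) -> curveP Phi x0 -> curveP Phi' x0.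
Proof.
move=> E [c [cL [c0 [cP cB]]]]; exists c; do 3!split => //.
by move=> t; rewrite -!E cP.
Qed.
Lemma lipf_entry m n (i : 'I_m) (j : 'I_n) : lipf (fun M : 'M[R]_(m,n) => M i j).
Proof.
exists 1; split => // x y; rewrite mul1r.
by have := mx_entry_le _ _ (x - y) i j; rewrite !mxE.
Qed.
Definition bump dx dy (x0 : 'cV[R]_dx) (r : R) (i0 : 'I_dy) (x : 'cV[R]_dx) : 'cV[R]_dy :=
  (1 - 2 / r * `|x - x0|) *: delta_mx i0 0.
Arguments bump {dx dy}.
Lemma bump_entry dx dy (x0 : 'cV[R]_dx) (r : R) (i0 : 'I_dy) (x : 'cV[R]_dx) : bump x0 r i0 x i0 0 = 1 - 2 / r * `|x - x0|.
Proof. by rewrite /bump !mxE !eqxx mulr1. Qed.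
Lemma bump_entry' dx dy (x0 : 'cV[R]_dx) (r : R) (i0 : 'I_dy) (x : 'cV[R]_dx) : bump x0 r i0 x i0 ord0 = 1 - 2 / r * `|x - x0|.
Proof. exact: bump_entry. Qed.
Lemma mx_subE m n (A B : 'M[R]_(m,n)) i j : (A - B) i j = A i j - B i j.
Proof. by rewrite !mxE. Qed.
Lemma bump_cont dx dy (x0 : 'cV[R]_dx) (r : R) (i0 : 'I_dy) : continuous (bump x0 r i0).
Proof.
apply: lipf_cont; exists (`|2 / r| * `|delta_mx i0 0 : 'cV[R]_dy| + 1); split.
  by rewrite ltr_wpDl // mulr_ge0.
move=> x y; rewrite /bump -scalerBl normrZ.
have -> : 1 - 2 / r * `|x - x0| - (1 - 2 / r * `|y - x0|) = 2 / r * (`|y - x0| - `|x - x0|) by ring.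
rewrite normrM mulrAC; apply: ler_pM; rewrite ?mulr_ge0 //.
  by rewrite lerDl.
have := ler_dist_dist (y - x0) (x - x0).
move=> h; apply: (le_trans h); have -> : y - x0 - (x - x0) = y - x by rewrite opprB addrA subrK.
by rewrite distrC.
Qed.
Lemma curve_contra dx dy (K : set 'cV[R]_dx) (x0 : 'cV[R]_dx) (r : R) (i0 : 'I_dy)
  (f : 'cV[R]_dx -> 'cV[R]_dy) :
  0 < r -> (forall x, `|x - x0| < r -> K x) ->
  curveP (fun x => f x i0 0) x0 ->
  (forall x, K x -> `|f x - bump x0 r i0 x| < 2^-1) -> False.
Proof.
move=> r0 Kr [c [cL [c0 [cP cB]]]] Hf.
have [T [T0 HT]] := cB r.
have rc : continuous (fun t => `|c t - x0|).
  apply: lipf_cont; case: cL => L [L0 HL]; exists L; split => // s t.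
  apply: le_trans (HL s t).
  have := ler_dist_dist (c s - x0) (c t - x0).
  by have -> : c s - x0 - (c t - x0) = c s - c t by rewrite opprB addrA subrK.
have hv : Num.min `|c 0 - x0| `|c T - x0| <= r / 2 <= Num.max `|c 0 - x0| `|c T - x0|.
  rewrite c0 subrr normr0 ge_min le_max; apply/andP; split; apply/orP.
    by left; rewrite divr_ge0 // ltW.
  by right; apply: le_trans HT; lra.
have [t _ Ht] := @IVT _ (fun t => `|c t - x0|) 0 T (r / 2) T0 (continuous_subspaceT rc) hv.
have K0 : K x0 by apply: Kr; rewrite subrr normr0.
have Kt : K (c t) by apply: Kr; rewrite Ht; lra.
have := Hf _ K0; have := Hf _ Kt.
move=> h1 h2.
have e1 := le_lt_trans (mx_entry_le _ _ _ i0 ord0) h1.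
have e2 := le_lt_trans (mx_entry_le _ _ _ i0 ord0) h2.
have cP' := cP t; change (f (c t) i0 ord0 = f x0 i0 ord0) in cP'.
move: e1 e2; rewrite !mx_subE !bump_entry' cP' Ht subrr normr0.
rewrite !ltr_norml => /andP[a1 a2] /andP[a3 a4].
have : 2 / r * (r / 2) = 1 by field; rewrite gt_eqF.
lra.
Qed.

Lemma norm_delta n (j0 : 'I_n) : `|delta_mx j0 0 : 'cV[R]_n| = 1.
Proof.
apply/eqP; rewrite eq_le; apply/andP; split.
  apply: mx_le_entries => // i j; rewrite mxE.
  by case: (_ && _); rewrite ?normr1 ?normr0.
by have := mx_entry_le _ _ (delta_mx j0 0 : 'cV[R]_n) j0 0; rewrite mxE !eqxx normr1.
Qed.
Lemma inj_contra dx dy (K : set 'cV[R]_dx) (x0 : 'cV[R]_dx) (r : R) (i0 : 'I_dy) (j0 : 'I_dx)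
  (f : 'cV[R]_dx -> 'cV[R]_dy) :
  0 < r -> (forall x, `|x - x0| < r -> K x) ->
  lipf (fun x => f x i0 0) -> (forall x y, f x i0 0 = f y i0 0 -> x = y) ->
  (forall x, K x -> `|f x - bump x0 r i0 x| < 2^-1) -> False.
Proof.
move=> r0 Kr fL finj Hf.
pose e : 'cV[R]_dx := delta_mx j0 0.
pose phi s := f (x0 + s *: e) i0 0.
have phic : continuous phi.
  have h1 : lipf (fun s : R => x0 + s *: e).
    exists 1; split => // s t; rewrite mul1r opprD addrACA subrr add0r -scalerBl normrZ.
    by rewrite /e norm_delta mulr1.
  exact: (lipf_cont _ (lipf_comp _ _ h1 fL)).
have phii : forall s t, phi s = phi t -> s = t.
  move=> s t /finj /addrI /matrixP /(_ j0 0); rewrite !mxE !eqxx !mulr1 //.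
have val : forall s, `|s| < r -> `|phi s - (1 - 2 / r * `|s|)| < 2^-1.
  move=> s hs; have Ks : K (x0 + s *: e).
    by apply: Kr; rewrite addrAC subrr add0r normrZ /e norm_delta mulr1.
  have := le_lt_trans (mx_entry_le _ _ _ i0 ord0) (Hf _ Ks).
  by rewrite mx_subE bump_entry' addrAC subrr add0r normrZ /e norm_delta mulr1.
have h0 := val 0; rewrite normr0 mulr0 subr0 in h0; have {}h0 := h0 r0.
have hp := val (r / 2); have hm := val (- (r / 2)).
rewrite normrN gtr0_norm in hm; last by rewrite divr_gt0.
rewrite gtr0_norm in hp; last by rewrite divr_gt0.
have r2 : r / 2 < r by lra.
have {}hp := hp r2; have {}hm := hm r2.
have q : 2 / r * (r / 2) = 1 by field; rewrite gt_eqF.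
rewrite q subrr subr0 in hp hm.
move: h0 hp hm; rewrite !ltr_norml => /andP[a1 a2] /andP[a3 a4] /andP[a5 a6].
have [le|lt] := leP (phi (- (r / 2))) (phi (r / 2)).
  have hv : Num.min (phi (- (r / 2))) (phi 0) <= phi (r / 2) <= Num.max (phi (- (r / 2))) (phi 0).
    apply/andP; split; [rewrite ge_min; apply/orP; left; exact: le|rewrite le_max; apply/orP; right; lra].
  have [s sI /phii ps] := @IVT _ phi (- (r / 2)) 0 (phi (r / 2)) (ltac:(lra)) (continuous_subspaceT phic) hv.
  by move: sI; rewrite in_itv /= ps; case/andP => _; lra.
have hv : Num.min (phi 0) (phi (r / 2)) <= phi (- (r / 2)) <= Num.max (phi 0) (phi (r / 2)).
  apply/andP; split; [rewrite ge_min; apply/orP; right; exact: ltW|rewrite le_max; apply/orP; left; lra].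
have [s sI /phii ps] := @IVT _ phi 0 (r / 2) (phi (- (r / 2))) (ltac:(lra)) (continuous_subspaceT phic) hv.
by move: sI; rewrite in_itv /= ps; case/andP; lra.
Qed.
Definition hat dx dy (x0 : 'cV[R]_dx) (j0 : 'I_dx) (d : R) (x : 'cV[R]_dx) : 'cV[R]_dy :=
  \col_(i < dy) Num.max 0 (1 - `|(x - x0) j0 0 - (i.+1)%:R * d| / d).
Arguments hat {dx dy}.
Lemma max0_lip (a b : R) : `|Num.max 0 a - Num.max 0 b| <= `|a - b|.
Proof.
have E : forall x : R, Num.max 0 x = (x + `|x|) / 2.
  move=> x; have [hx|hx] := leP 0 x.
    by rewrite ger0_norm //; field.
  by rewrite ltr0_norm //; field.
rewrite !E.
have h := ler_dist_dist a b.
have -> : (a + `|a|) / 2 - (b + `|b|) / 2 = ((a - b) + (`|a| - `|b|)) / 2 by field.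
rewrite normrM (ger0_norm (x := 2^-1)) ?invr_ge0 ?ler0n //.
apply: (le_trans (ler_wpM2r _ (ler_normD _ _))); first by rewrite invr_ge0 ler0n.
lra.
Qed.
Lemma hat_cont dx dy (x0 : 'cV[R]_dx) j0 d : 0 < d -> continuous (@hat dx dy x0 j0 d).
Proof.
move=> d0; apply: lipf_cont; exists (d^-1); split; first by rewrite invr_gt0.
move=> x y; apply: mx_le_entries => [|i j]; first by rewrite mulr_ge0 // invr_ge0 ltW.
rewrite !mxE; apply: (le_trans (max0_lip _ _)).
set A := x j0 0 - x0 j0 0 - i.+1%:R * d; set B := y j0 0 - x0 j0 0 - i.+1%:R * d.
have -> : 1 - `|A| / d - (1 - `|B| / d) = (`|B| - `|A|) / d by field; rewrite gt_eqF.
rewrite normrM (gtr0_norm (x := d^-1)) ?invr_gt0 // mulrC; apply: ler_wpM2l; first by rewrite invr_ge0 ltW.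
apply: (le_trans (ler_dist_dist _ _)).
have := mx_entry_le _ _ (x - y) j0 0.
rewrite !mxE distrC /A /B => h; apply: le_trans h.
have -> : x j0 0 - x0 j0 0 - i.+1%:R * d - (y j0 0 - x0 j0 0 - i.+1%:R * d) = x j0 0 - y j0 0 by ring.
by [].
Qed.

Lemma nat_dist (i j : nat) : i != j -> 1 <= `|i%:R - j%:R| :> R.
Proof.
move=> ij; rewrite ler_normr; apply/orP.
case: (ltngtP i j) ij => // h _.
  by right; rewrite opprB lerBrDr nat1r ler_nat.
by left; rewrite lerBrDr nat1r ler_nat.
Qed.
Lemma hat_val dx dy (x0 : 'cV[R]_dx) (j0 : 'I_dx) (d s : R) (i : 'I_dy) :
  @hat dx dy x0 j0 d (x0 + s *: delta_mx j0 0) i 0 = Num.max 0 (1 - `|s - (i.+1)%:R * d| / d).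
Proof.
rewrite mxE mx_subE.
have -> : (x0 + s *: delta_mx j0 0) j0 0 = x0 j0 0 + s by rewrite !mxE !eqxx mulr1.
by rewrite (addrC (x0 j0 0) s) addrK.
Qed.
Lemma dy_contra dx dy (K : set 'cV[R]_dx) (x0 : 'cV[R]_dx) (r : R) (j0 : 'I_dx)
  (f : 'cV[R]_dx -> 'cV[R]_dy) (u : 'rV[R]_dy) (c : 'M[R]_1) :
  (0 < dy)%N -> 0 < r -> (forall x, `|x - x0| < r -> K x) -> u != 0 ->
  (forall x, u *m f x = c) ->
  (forall x, K x -> `|f x - hat x0 j0 (r / (dy.+1)%:R) x| < (4 * dy%:R)^-1) -> False.
Proof.
move=> dy0 r0 Kr u0 Hu Hf.
set d := r / (dy.+1)%:R.
have d0 : 0 < d by rewrite divr_gt0 // ltr0n.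
pose eps : R := (4 * dy%:R)^-1.
have eps0 : 0 < eps by rewrite invr_gt0 mulr_gt0 // ltr0n.
pose U (w : 'cV[R]_dy) := \sum_j u 0 j * w j 0.
pose S := \sum_j `|u 0 j|.
have S0 : 0 <= S by apply: sumr_ge0 => j _.
have UB : forall w, `|U w| <= S * `|w|.
  move=> w; apply: (le_trans (ler_norm_sum _ _ _)); rewrite /S mulr_suml.
  apply: ler_sum => j _; rewrite normrM ler_wpM2l //; exact: mx_entry_le.
have UD : forall w w', U (w - w') = U w - U w'.
  move=> w w'; rewrite /U -sumrB; apply: eq_bigr => j _; rewrite mx_subE; ring.
have Uf : forall x, U (f x) = c 0 0 by move=> x; rewrite -(Hu x) mxE.
pose e : 'cV[R]_dx := delta_mx j0 0.
pose p (k : 'I_dy) := x0 + (k.+1%:R * d) *: e.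
have Kp : forall k, K (p k).
  move=> k; apply: Kr; rewrite /p (addrC x0) addrK normrZ /e norm_delta mulr1.
  rewrite ger0_norm ?mulr_ge0 ?ltW // /d mulrA ltr_pdivrMr ?ltr0n //.
  rewrite mulrC ltr_pM2l // ltr_nat; exact: ltn_ord.
have K0 : K x0 by apply: Kr; rewrite subrr normr0.
have hx0 : x0 = x0 + 0 *: e by rewrite scale0r addr0.
have gp : forall k, U (hat x0 j0 d (p k)) = u 0 k.
  move=> k; rewrite /U (bigD1 k) //= big1 ?addr0.
    rewrite hat_val subrr normr0 mul0r subr0 max_r ?ler01 // mulr1 //.
  move=> i ik; rewrite hat_val -mulrBl normrM (gtr0_norm d0) mulfK ?gt_eqF //.
  rewrite max_l ?mulr0 //; rewrite subr_le0; apply: nat_dist.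
  by apply: contra ik => /eqP [] /val_inj ->.
have g0 : U (hat x0 j0 d x0) = 0.
  rewrite /U big1 // => i _; have := hat_val _ _ x0 j0 d 0 i; rewrite scale0r addr0 => ->.
  rewrite sub0r normrN normrM (gtr0_norm d0).
  rewrite mulfK ?gt_eqF // max_l ?mulr0 // normr_nat subr_le0 ler1n //.
have DB : forall x, K x -> `|U (f x - hat x0 j0 d x)| <= S * eps.
  move=> x Kx; apply: (le_trans (UB _)); apply: ler_wpM2l => //; exact: ltW (Hf _ Kx).
have ui : forall k, `|u 0 k| <= 2 * S * eps.
  move=> k; have -> : u 0 k = U (f x0 - hat x0 j0 d x0) - U (f (p k) - hat x0 j0 d (p k)).
    by rewrite !UD !Uf gp g0; ring.
  apply: (le_trans (ler_normB _ _)).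
  have := DB _ K0; have := DB _ (Kp k); lra.
have : S <= dy%:R * (2 * S * eps).
  rewrite {1}/S; apply: (le_trans (ler_sum _ (fun k _ => ui k))).
  by rewrite sumr_const card_ord (mulr_natl (2 * S * eps) dy).
have -> : dy%:R * (2 * S * eps) = S / 2.
  rewrite /eps; field; rewrite pnatr_eq0 -lt0n dy0 //.
move=> hS; have SZ : S = 0 by lra.
move/negP: u0; apply; apply/eqP/rowP => k; rewrite mxE.
have := psumr_eq0P (fun j _ => normr_ge0 (u 0 j)) SZ.
move=> /(_ k isT) /eqP; rewrite normr_eq0 => /eqP.
by [].
Qed.
Lemma lipf_ext {U V : normedModType R} (G G' : U -> V) : (forall x, G x = G' x) -> lipf G -> lipf G'.
Proof. by move=> E [L [L0 HL]]; exists L; split => // x y; rewrite -!E. Qed.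
Lemma mx_addE m n (A B : 'M[R]_(m,n)) i j : (A + B) i j = A i j + B i j.
Proof. by rewrite !mxE. Qed.
Lemma row_entry m n (Wo : 'M[R]_(m, n)) (h : 'cV[R]_n) i : (row i Wo *m h) 0 0 = (Wo *m h) i 0.
Proof. by rewrite -row_mul mxE. Qed.
Lemma main_aux (alpha : R) (dx dy N : nat)
  (K : set 'cV[R]_dx) :
  0 < alpha -> alpha != 1 -> (0 < dx)%N -> (0 < dy)%N ->
  compact K -> interior K !=set0 ->
  (N < maxn dx.+1 dy)%N ->
  ~ @leaky_UAP R alpha dx dy N K.
Proof.
move=> a0 _ dx0 dy0 _ [x0 intx] Nlt UAP.
have [r r0 Kr] : exists2 r : R, 0 < r & forall x, `|x - x0| < r -> K x.
  move: intx => /nbhs_normP [r /= r0 Hr]; exists r => // x hx; apply: Hr.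
  by rewrite /ball_ /= distrC.
pose i0 : 'I_dy := Ordinal dy0.
pose j0 : 'I_dx := Ordinal dx0.
have [Ndy|Ndy] := ltnP N dy.
  pose d := r / (dy.+1)%:R.
  have d0 : 0 < d by rewrite divr_gt0 // ltr0n.
  have eps0 : 0 < (4 * dy%:R)^-1 :> R by rewrite invr_gt0 mulr_gt0 // ltr0n.
  have [f [[W1 [b1 [hs [Wo [bo Hf]]]]] Hap]] :=
    UAP (hat x0 j0 d) (continuous_subspaceT (hat_cont _ _ x0 j0 _ d0)) _ eps0.
  have [v [v0 Hv]] := ker_of_lt _ _ Wo^T Ndy.
  apply: (@dy_contra _ _ K x0 r j0 f v^T (v^T *m bo) dy0 r0 Kr _ _ Hap).
    by rewrite trmx_eq0.
  move=> x; rewrite Hf /nn_eval mulmxDr mulmxA.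
  have -> : v^T *m Wo = 0 by rewrite -[Wo]trmxK -trmx_mul Hv trmx0.
  by rewrite mul0mx add0r.
have Ndx : (N <= dx)%N.
  move: Nlt; rewrite leq_max ltnS => /orP[//|h]; by move: Ndy; rewrite leqNgt h.
have eps0 : 0 < 2^-1 :> R by rewrite invr_gt0 ltr0n.
have [f [[W1 [b1 [hs [Wo [bo Hf]]]]] Hap]] :=
  UAP (bump x0 r i0) (continuous_subspaceT (bump_cont _ _ x0 r i0)) _ eps0.
move: Ndx; rewrite leq_eqVlt => /orP[/eqP eN|ltN].
  subst N.
  have [cF|gF] := @fold_dich alpha dx ((W1,b1)::hs) (fun x => x) x0 a0 (good_id _).
    have c2 := @curve_comp _ _ _ _ (fun h => (Wo *m h + bo) i0 0) x0 cF.
    apply: (@curve_contra _ _ K x0 r i0 f r0 Kr _ Hap).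
    apply: (@curve_ext _ _ _ _ x0 _ c2) => x; by rewrite Hf.
  pose F x := foldl (fun h p => act alpha (p.1 *m h + p.2)) x ((W1,b1)::hs).
  have gF' : good F := gF.
  have fE : forall x, f x i0 0 = (row i0 Wo *m F x) 0 0 + bo i0 0.
    by move=> x; rewrite Hf row_entry /nn_eval mx_addE.
  case: (ker_or_free _ _ (row i0 Wo)) => [[v [v0 Hv]]|Hfr].
    have c1 := @curve_ker _ _ F (row i0 Wo) v x0 gF' v0 Hv.
    have c2 := @curve_comp _ _ _ _ (fun M : 'M[R]_(1,1) => M 0 0 + bo i0 0) x0 c1.
    apply: (@curve_contra _ _ K x0 r i0 f r0 Kr _ Hap).
    apply: (@curve_ext _ _ _ _ x0 _ c2) => x /=; by rewrite fE.
  case: gF' => FL [H [HL [FH HF]]].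
  apply: (@inj_contra _ _ K x0 r i0 j0 f r0 Kr _ _ Hap).
    have h1 := lipf_comp _ _ FL (lipf_affine _ _ (row i0 Wo) ((bo i0 0)%:M)).
    have h2 := lipf_comp _ _ h1 (lipf_entry _ _ 0 0).
    apply: (lipf_ext _ _ _ h2) => x /=.
    by rewrite fE mx_addE; congr (_ + _); rewrite mxE /= mulr1n.
  move=> x y; rewrite !fE => /addIr E.
  have : row i0 Wo *m (F x - F y) = 0.
    by apply/matrixP => i j; rewrite !ord1 mulmxBr mx_subE E subrr mxE.
  move/(free_inj _ _ _ _ Hfr)/eqP; rewrite subr_eq0 => /eqP Exy.
  by rewrite -(HF x) Exy HF.
have [v [v0 Hv]] := ker_of_lt _ _ W1 ltN.
have c1 := @curve_ker _ _ (fun x => x) W1 v x0 (good_id _) v0 Hv.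
have c2 := @curve_comp _ _ _ _
  (fun h => (Wo *m foldl (fun h p => act alpha (p.1 *m h + p.2)) (act alpha (h + b1)) hs + bo) i0 0) x0 c1.
apply: (@curve_contra _ _ K x0 r i0 f r0 Kr _ Hap).
apply: (@curve_ext _ _ _ _ x0 _ c2) => x; by rewrite Hf.
Qed.
End S.

Theorem lemma2p3 (R : realType) (alpha : R) (dx dy N : nat)
  (K : set 'cV[R]_dx) :
  0 < alpha -> alpha != 1 -> (0 < dx)%N -> (0 < dy)%N ->
  compact K -> interior K !=set0 ->
  (N < maxn dx.+1 dy)%N ->
  ~ @leaky_UAP R alpha dx dy N K.
Proof. exact: main_aux. Qed.
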